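(* For all $\lambda\in[0,1]$ and all $i\neq j$, $k\in\{-1,1\}$, the functions $R_{i,j}^{(k)}$ satisfy $$R_{i,j}^{(k)}(\lambda)=\lambda\Big[p_{i,j}^{(k)}+\sum_{m\neq i,j}p_{i,m}^{(k)}R_{m,j}^{(k)}(\lambda)+\sum_{m\neq i}p_{i,m}^{(-k)}R_{m,i}^{(-k)}(\lambda)R_{i,j}^{(k)}(\lambda)\Big].$$
   Context: Fix an integer $N\ge 3$. Let $\mathcal G_N$ be the groupoid with object set $\{1,\dots,N\}$ generated by arrows $A_{i,j}^{(k)}$, $i\neq j\in\{1,\dots,N\}$, $k\in\{-1,1\}$, with source $i$ and target $j$, subject to the relations $A_{i,j}^{(k)}A_{j,\ell}^{(k)}=A_{i,\ell}^{(k)}$ for all $i,j,\ell$, $k$, with the convention $A_{i,i}^{(k)}:=e_i$ (unit at object $i$). Let $\mathcal A$ be its arrow set. Let $\{W_n\}_{n\ge0}$ be the Markov chain on $\mathcal A$ with $P(W_{n+1}=y\mid W_n=x)=p_{i,j}^{(k)}$ if $x^{-1}y=A_{i,j}^{(k)}$ with $i\ne j$ and $0$ otherwise, where $p_{i,j}^{(k)}\in(0,1)$ and $\sum_{j\ne i}\sum_{k=\pm1}p_{i,j}^{(k)}=1$ for each $i$; $P_x,E_x$ denote law and expectation with $W_0=x$. For $x\in\mathcal A$ let $T(0,x)=\inf\{n\ge0:W_n=W_0x\}$ (possibly $\infty$), and define $R_{i,j}^{(k)}(\lambda)=E_{e_i}[\lambda^{T(0,A_{i,j}^{(k)})}]=\sum_{n\ge0}P_{e_i}(T(0,A_{i,j}^{(k)})=n)\lambda^n$.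 *)

(* Defs.v *)
From HB Require Import structures.
From mathcomp Require Import all_boot all_order all_algebra.
From mathcomp Require Import all_classical all_reals all_analysis.
Set Implicit Arguments. Unset Strict Implicit. Unset Printing Implicit Defensive.
Import Order.TTheory GRing.Theory Num.Theory.
Local Open Scope ring_scope.

(* Objects are 'I_N (object i+1 of the paper is the ordinal i).             *)
(* Labels k \in {-1,1} are encoded as bool: true <-> +1, false <-> -1, so    *)
(* that -k is ~~ k.                                                         *)
(* For a fixed label k the generators A^(k)_{ij} with the relations          *)
(* A^(k)_{ij} A^(k)_{jl} = A^(k)_{il} form the pair groupoid on {1..N}; G_N  *)
(* is the free product (amalgamated over the objects) of the two copies.     *)
(* Its arrows with source s are therefore in bijection with reduced words    *)
(*   A^(k1)_{s,i1} A^(k2)_{i1,i2} ... A^(kn)_{i(n-1),in}                     *)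
(* with consecutive objects distinct and consecutive labels different         *)
(* (k_{t+1} = - k_t); the empty word is the unit e_s.                        *)
(* We store such a word latest-letter-first as the list                      *)
(*   [:: (kn,in); ...; (k1,i1)].                                             *)

Definition word (N : nat) := seq (bool * 'I_N).


Definition target N (s : 'I_N) (w : word N) : 'I_N := head s [seq x.2 | x <- w].

(* right multiplication of the arrow (s, w) by the generator A^(k)_{t,j},
   t = target s w, j != t; the result is again in reduced form *)
Definition mulgen N (s : 'I_N) (w : word N) (j : 'I_N) (k : bool) : word N :=
  match w with
  | [::] => [:: (k, j)]
  | (k', t) :: r =>
      if k' != k then (k, j) :: w
      else if j == head s [seq x.2 | x <- r] then r   (* A_{p t} A_{t p} = e_p *)
      else (k, j) :: r                                 (* A_{p t} A_{t j} = A_{p j} *)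
  end.

(* A step of the walk is a pair (j,k): multiply on the right by A^(k)_{t,j}. *)
Definition step N := ('I_N * bool)%type.

Fixpoint walk N (s : 'I_N) (w : word N) (st : seq (step N)) : seq (word N) :=
  match st with
  | [::] => [::]
  | (j, k) :: st' => let w' := mulgen s w j k in w' :: walk s w' st'
  end.

Fixpoint pathprob (R : realType) N (p : 'I_N -> 'I_N -> bool -> R)
    (s : 'I_N) (w : word N) (st : seq (step N)) : R :=
  match st with
  | [::] => 1
  | (j, k) :: st' =>
      (if j != target s w then p (target s w) j k else 0)
        * pathprob p s (mulgen s w j k) st'
  end.

(* P_{e_i}(T(0,x) = n): W_0 = e_i (empty word), and W_0 x = x. *)
Definition hitprob (R : realType) N (p : 'I_N -> 'I_N -> bool -> R)
    (i : 'I_N) (x : word N) (n : nat) : R :=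
  \sum_(st : n.-tuple (step N))
     pathprob p i [::] st *
     (let pos := [::] :: walk i [::] st in
      ((nth [::] pos n == x) && all (fun y => y != x) (take n pos))%:R).

Definition Rgen (R : realType) N (p : 'I_N -> 'I_N -> bool -> R)
    (i j : 'I_N) (k : bool) (lam : R) : R :=
  limn (fun M : nat => \sum_(0 <= n < M) hitprob p i [:: (k, j)] n * lam ^+ n).

(* Main.v *)
Require Import Defs.
From HB Require Import structures.
From mathcomp Require Import all_boot all_order all_algebra.
From mathcomp Require Import all_classical all_reals all_analysis.
From mathcomp Require Import ring zify.
Set Implicit Arguments. Unset Strict Implicit. Unset Printing Implicit Defensive.
Import Order.TTheory GRing.Theory Num.Theory.
Local Open Scope ring_scope.

Section Comb.
Variables (R : realType) (N : nat) (p : 'I_N -> 'I_N -> bool -> R).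

Lemma sum_tupleS (T : finType) n (F : n.+1.-tuple T -> R) :
  \sum_(t : n.+1.-tuple T) F t =
  \sum_(a : T) \sum_(t : n.-tuple T) F [tuple of a :: t].
Proof.
rewrite pair_big /=.
pose h (u : T * n.-tuple T) : n.+1.-tuple T := [tuple of u.1 :: u.2].
pose g (t : n.+1.-tuple T) : T * n.-tuple T := (thead t, [tuple of behead t]).
rewrite (reindex h) /=; last first.
  exists g.
    move=> [a t] _; rewrite /g /h /=.
    congr pair.
    by apply: val_inj.
  move=> t _; rewrite /g /h /=.
  by rewrite [RHS]tuple_eta; apply: val_inj.
by apply: eq_bigr => -[a t].
Qed.

Lemma sum_tuple0 (T : finType) (F : 0.-tuple T -> R) :
  \sum_(t : 0.-tuple T) F t = F [tuple].
Proof.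
by rewrite (big_pred1 [tuple]) // => t; apply/esym/eqP/tuple0.
Qed.

Definition q (s : 'I_N) (w : word N) (a : step N) : R :=
  if a.1 != target s w then p (target s w) a.1 a.2 else 0.

Definition mg (s : 'I_N) (w : word N) (a : step N) := mulgen s w a.1 a.2.

Fixpoint H (s : 'I_N) (w : word N) (x : word N) (n : nat) : R :=
  match n with
  | 0 => (w == x)%:R
  | n.+1 => (w != x)%:R * \sum_(a : step N) q s w a * H s (mg s w a) x n
  end.

Definition G (s : 'I_N) (w x : word N) (n : nat) : R :=
  \sum_(st : n.-tuple (step N))
     pathprob p s w st *
     (let pos := w :: walk s w st in
      ((nth [::] pos n == x) && all (fun y => y != x) (take n pos))%:R).

Lemma G_H s w x n : G s w x n = H s w x n.
Proof.
elim: n w => [|n IH] w.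
  by rewrite /G sum_tuple0 /= mul1r andbT.
rewrite /G sum_tupleS /= mulr_sumr; apply: eq_bigr => -[j k] _.
rewrite -IH /G mulr_sumr mulr_sumr; apply: eq_bigr => t _ /=.
rewrite /q /mg /=.
case: (w != x); rewrite ?mul1r ?mul0r ?andbF ?mulr0 //=.
by rewrite mulrA.
Qed.

Lemma hitprob_H i x n : hitprob p i x n = H i [::] x n.
Proof. by rewrite -G_H. Qed.


Lemma sum_step (f : step N -> R) :
  \sum_(a : step N) f a = \sum_(j : 'I_N) \sum_(k : bool) f (j, k).
Proof. by rewrite pair_big; apply: eq_bigr => -[]. Qed.

Lemma sum_bool (f : bool -> R) k : \sum_(k' : bool) f k' = f k + f (~~ k).
Proof. by rewrite big_bool; case: k => //=; rewrite addrC. Qed.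

Fixpoint lmul (i m : 'I_N) (kk : bool) (u : word N) : word N :=
  match u with
  | [::] => [:: (kk, m)]
  | a :: r => if r is _ :: _ then a :: lmul i m kk r
              else if a.1 != kk then [:: a; (kk, m)]
              else if a.2 == i then [::] else [:: (kk, a.2)]
  end.

Fixpoint alt (w : word N) : bool :=
  match w with
  | a :: r => if r is b :: _ then (a.1 != b.1) && alt r else true
  | [::] => true
  end.

Lemma alt_mulgen s w j k : alt w -> alt (mulgen s w j k).
Proof.
case: w => [|[k' t] r] //=.
case: r => [|b r] /=.
  by move=> _; case: ifP => h /=; [rewrite eq_sym h | case: ifP].
move=> /andP[hb hr].
case: ifP => [hk|/negbFE/eqP hk]; first by rewrite /= eq_sym hk hb hr.
case: ifP => _ //=.
by rewrite -hk hb hr.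
Qed.

Lemma target_lmul i m kk u : target i (lmul i m kk u) = target m u.
Proof.
case: u => [|[k1 i1] r] //=.
case: r => [|b r] //=.
case: ifP => //= _; case: ifP => //= /eqP -> //.
Qed.


Lemma lmul_nil i m kk : lmul i m kk [::] = [:: (kk, m)]. Proof. by []. Qed.
Lemma lmul_cons2 i m kk a b r : lmul i m kk (a :: b :: r) = a :: lmul i m kk (b :: r).
Proof. by []. Qed.
Lemma lmul_1 i m kk a : lmul i m kk [:: a] =
  if a.1 != kk then [:: a; (kk, m)] else if a.2 == i then [::] else [:: (kk, a.2)].
Proof. by []. Qed.
Arguments lmul : simpl never.

Lemma mulgen_cons (s : 'I_N) k1 t r j k : mulgen s ((k1, t) :: r) j k =
  if k1 != k then (k, j) :: (k1, t) :: r
  else if j == target s r then r else (k, j) :: r.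
Proof. by []. Qed.
Lemma mulgen_nil (s : 'I_N) j k : mulgen s [::] j k = [:: (k, j)].
Proof. by []. Qed.

Lemma target_nil (s : 'I_N) : target s [::] = s. Proof. by []. Qed.
Lemma target_cons (s : 'I_N) a r : target s (a :: r) = a.2. Proof. by []. Qed.

Ltac simp_w := rewrite ?lmul_nil ?lmul_1 ?lmul_cons2 ?mulgen_cons ?mulgen_nil
   ?target_nil ?target_cons ?eqseq_cons ?xpair_eqE ?eqxx ?andbT ?andbF /=.

Ltac contra := match goal with H : is_true (?x != ?x) |- _ => by rewrite eqxx in H end.

Ltac solve_eqs :=
  simp_w;
  repeat (match goal with |- context [?a == ?b] => is_var a; is_var b;
            let E := fresh "E" in let Hn := fresh "Hn" in
            destruct (eqVneq a b) as [E|Hn]; [subst|] end;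
          simp_w; try contra);
  try done.

Lemma lmul_mulgen i m kk u j' k' : m != i -> j' != target m u ->
  lmul i m kk (mulgen m u j' k') = mulgen i (lmul i m kk u) j' k'.
Proof.
move=> mi.
case: u => [|[k1 t] r] hj.
  rewrite mulgen_nil lmul_1 lmul_nil mulgen_cons /=.
  by case: k'; case: kk => /=; solve_eqs.
case: r hj => [|[k2 t2] r] hj.
  rewrite lmul_1 mulgen_cons /=.
  by move: hj; rewrite target_cons /=; case: k1; case: k'; case: kk => hj /=; solve_eqs.
rewrite mulgen_cons lmul_cons2 mulgen_cons target_lmul.
case: ifP => _; first by rewrite !lmul_cons2.
by case: ifP => _; rewrite ?lmul_cons2.
Qed.


Lemma lmul_nilE i m kk u : (lmul i m kk u == [::]) = (u == [:: (kk, i)]).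
Proof.
case: u => [|[k1 t] [|b r]] //; last first.
  by rewrite lmul_cons2 eqseq_cons; case: ((k1, t) == (kk, i)).
by rewrite lmul_1 /=; case: k1; case: kk; solve_eqs.
Qed.

Lemma lmul_xE i m kk j u : alt u -> m != j -> j != i ->
  (lmul i m kk u == [:: (kk, j)]) = (u == [:: (kk, j)]).
Proof.
move=> au mj ji.
case: u au => [|[k1 t] [|[k2 t2] r]] au.
- by rewrite lmul_nil /= eqE /= eqE /= (negbTE mj) andbF.
- by clear au; rewrite lmul_1 /=; case: k1; case: kk; solve_eqs.
rewrite lmul_cons2.
have -> : ((k1, t) :: lmul i m kk ((k2, t2) :: r) == [:: (kk, j)]) =
   ((k1, t) == (kk, j)) && (lmul i m kk ((k2, t2) :: r) == [::]) by [].
rewrite lmul_nilE.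
rewrite [RHS]eqseq_cons.
case: (eqVneq ((k2, t2) :: r) [:: (kk, i)]) => [E'|_].
  case: (eqVneq (k1, t) (kk, j)) => [E|] //.
  by move: au; case: E => -> ->; case: E' => -> -> -> /=; rewrite eqxx.
by rewrite andbF; case: ((k1, t) == (kk, j)).
Qed.

Lemma H_lmul i m kk y y' n : m != i ->
  (forall u, alt u -> (lmul i m kk u == y') = (u == y)) ->
  forall u, alt u -> H i (lmul i m kk u) y' n = H m u y n.
Proof.
move=> mi hy.
elim: n => [|n IH] u au /=; first by rewrite hy.
rewrite hy //; congr (_ * _); apply: eq_bigr => -[j' k'] _.
rewrite /q target_lmul /mg /=.
case: ifP => hj; last by rewrite !mul0r.
by rewrite -lmul_mulgen // IH //; apply: alt_mulgen.
Qed.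

Definition lastlab (w : word N) : option bool :=
  if w is a :: r then Some (last a r).1 else None.

Lemma lastlab_mulgen (s : 'I_N) w j k kk : lastlab w = Some kk ->
  lastlab (mulgen s w j k) = Some kk \/ mulgen s w j k = [::].
Proof.
case: w => [|[k' t] r] //= [hl].
case: ifP => hk; first by left; rewrite /= hl.
case: ifP => _.
  by case: r hl => [|b r] hl; [right | left; rewrite /= hl].
case: r hl => [|b r] hl /=; last by left; rewrite hl.
by left; move/negbFE/eqP: hk => <-; rewrite -hl.
Qed.

Lemma H_nil_nil (s : 'I_N) b : H s [::] [::] b = (b == 0)%:R.
Proof. by case: b => [|b] //=; rewrite ?eqxx mul0r. Qed.

Lemma H_from_nil (s : 'I_N) x n :
  H s [::] x n = \sum_(b < n.+1) H s [::] [::] b * H s [::] x (n - b)%N.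
Proof.
rewrite big_ord_recl H_nil_nil mul1r subn0 big1 ?addr0 // => b _.
by rewrite H_nil_nil mul0r.
Qed.

Lemma H_split (s : 'I_N) kk x n : lastlab x != Some kk -> x != [::] ->
  forall w, lastlab w = Some kk ->
  H s w x n = \sum_(b < n.+1) H s w [::] b * H s [::] x (n - b)%N.
Proof.
move=> hx hx0.
have wx : forall w, lastlab w = Some kk -> (w == x) = false.
  by move=> w hw; apply/negbTE; apply: contraNneq hx => <-; rewrite hw.
have w0 : forall w, lastlab w = Some kk -> (w == [::]) = false.
  by move=> [|a r].
elim: n => [|n IH] w hw.
  by rewrite big_ord1 /= wx // w0 // mul0r.
rewrite big_ord_recl /= wx // w0 // mul0r add0r mul1r.
have E : forall a, H s (mg s w a) x n =
   \sum_(b < n.+1) H s (mg s w a) [::] b * H s [::] x (n - b)%N.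
  move=> a; case: (lastlab_mulgen s a.1 a.2 hw) => [h|h].
    exact: IH.
  by rewrite /mg h; apply: H_from_nil.
transitivity (\sum_a q s w a * \sum_(b < n.+1) H s (mg s w a) [::] b * H s [::] x (n - b)%N).
  by apply: eq_bigr => a _; rewrite E.
under [LHS]eq_bigr do rewrite mulr_sumr.
rewrite exchange_big /=; apply: eq_bigr => b _.
rewrite /bump /= add1n subSS add0n mul1r mulr_suml; apply: eq_bigr => a _.
by rewrite mulrA.
Qed.

Lemma H_self (s : 'I_N) x n : H s x x n = (n == 0)%:R.
Proof. by case: n => [|n] /=; rewrite ?eqxx ?mul0r. Qed.

Lemma q_ge0 (hp0 : forall a b k, a != b -> 0 <= p a b k) s w a : 0 <= q s w a.
Proof. by rewrite /q; case: ifP => h //; apply: hp0; rewrite eq_sym. Qed.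

Lemma H_ge0 (hp0 : forall a b k, a != b -> 0 <= p a b k) s w x n : 0 <= H s w x n.
Proof.
elim: n w => [|n IH] w /=; first exact: ler0n.
apply: mulr_ge0; first exact: ler0n.
by apply: sumr_ge0 => a _; apply: mulr_ge0; [apply: q_ge0|apply: IH].
Qed.

Lemma sum_q (hsum : forall i : 'I_N, \sum_(j : 'I_N | j != i) \sum_(k : bool) p i j k = 1)
  s w : \sum_(a : step N) q s w a = 1.
Proof.
rewrite sum_step -(hsum (target s w)) [RHS]big_mkcond; apply: eq_bigr => j _.
rewrite /q /=; case: ifP => _ //.
by rewrite big1.
Qed.

Lemma H_sum_le1 (hp0 : forall a b k, a != b -> 0 <= p a b k)
  (hsum : forall i : 'I_N, \sum_(j : 'I_N | j != i) \sum_(k : bool) p i j k = 1)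
  s x M : forall w, \sum_(0 <= n < M) H s w x n <= 1.
Proof.
elim: M => [|M IH] w; first by rewrite big_nil ler01.
rewrite big_nat_recl //=.
case: (eqVneq w x) => [->|wx].
  by rewrite big1 ?addr0 // => n _; rewrite mul0r.
rewrite add0r.
under eq_bigr do rewrite mul1r.
rewrite exchange_big /= -(sum_q hsum s w); apply: ler_sum => a _.
rewrite -mulr_sumr; apply: ler_piMr; first exact: q_ge0.
exact: IH.
Qed.

Lemma H_coef (hp0 : forall a b k, a != b -> 0 <= p a b k) i j k n : i != j ->
  H i [::] [:: (k, j)] n.+1 = (n == 0)%:R * p i j k
  + \sum_(m | (m != i) && (m != j)) p i m k * H m [::] [:: (k, j)] n
  + \sum_(m | m != i) p i m (~~ k) *
      \sum_(b < n.+1) H m [::] [:: (~~ k, i)] b * H i [::] [:: (k, j)] (n - b)%N.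
Proof.
move=> ij.
rewrite /= mul1r sum_step (bigD1 i) //= big1 ?add0r; last first.
  by move=> k' _; rewrite /q /= eqxx mul0r.
have E : forall m, m != i -> \sum_(k' : bool) q i [::] (m, k') * H i (mg i [::] (m, k')) [:: (k, j)] n
   = p i m k * H i [:: (k, m)] [:: (k, j)] n + p i m (~~ k) * H i [:: (~~ k, m)] [:: (k, j)] n.
  by move=> m mi; rewrite (sum_bool _ k) /q /mg /= mi.
rewrite (eq_bigr _ E) big_split /= (bigD1 j) /=; last by rewrite eq_sym.
clear E.
rewrite (H_self i [:: (k, j)] n) [p i j k * _]mulrC.
congr (_ + _ + _).
  apply: eq_bigr => m /andP[mi mj].
  congr (_ * _).
  rewrite -(lmul_nil i m k) (H_lmul (y := [:: (k, j)])) //.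
  by move=> u au; apply: lmul_xE; rewrite // eq_sym.
apply: eq_bigr => m mi; congr (_ * _).
rewrite (@H_split i (~~ k)) //; last by case: k.
  apply: eq_bigr => b _; congr (_ * _).
  rewrite -(lmul_nil i m (~~ k)) (H_lmul (y := [:: (~~ k, i)])) //.
  by move=> u _; apply: lmul_nilE.
Qed.

End Comb.

Section Ana.
Variables (R : realType) (lam : R).
Hypotheses (hl0 : 0 <= lam) (hl1 : lam <= 1).

Definition S (f : nat -> R) M := \sum_(0 <= n < M) f n * lam ^+ n.

Lemma S_ge0 f M : (forall n, 0 <= f n) -> 0 <= S f M.
Proof. by move=> f0; apply: sumr_ge0 => n _; apply: mulr_ge0 => //; apply: exprn_ge0. Qed.

Lemma S_mono f : (forall n, 0 <= f n) -> {homo S f : a b / (a <= b)%N >-> a <= b}.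
Proof.
move=> f0 a b ab; rewrite /S [X in _ <= X](@big_cat_nat _ _ _ a) //= lerDl.
by apply: sumr_ge0 => n _; apply: mulr_ge0 => //; apply: exprn_ge0.
Qed.

Lemma S_le1 f M : (forall n, 0 <= f n) -> (forall M, \sum_(0 <= n < M) f n <= 1) ->
  S f M <= 1.
Proof.
move=> f0 f1; apply: le_trans (f1 M); apply: ler_sum => n _.
by apply: ler_piMr => //; apply: exprn_ile1.
Qed.

Lemma S_cvg f : (forall n, 0 <= f n) -> (forall M, \sum_(0 <= n < M) f n <= 1) ->
  cvgn (S f).
Proof.
move=> f0 f1; apply: nondecreasing_is_cvgn; first exact: S_mono.
by exists 1 => _ [n _ <-]; apply: S_le1.
Qed.

Lemma S_le_lim f M : (forall n, 0 <= f n) -> (forall M, \sum_(0 <= n < M) f n <= 1) ->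
  S f M <= limn (S f).
Proof.
move=> f0 f1; apply: nondecreasing_cvgn_le; [exact: S_mono | exact: S_cvg].
Qed.

Lemma lim_ge0 f : (forall n, 0 <= f n) -> (forall M, \sum_(0 <= n < M) f n <= 1) ->
  0 <= limn (S f).
Proof. by move=> f0 f1; apply: le_trans (S_le_lim 0 f0 f1); apply: S_ge0. Qed.

Lemma cauchy (e c : nat -> R) M :
  \sum_(0 <= n < M) (\sum_(b < n.+1) e b * c (n - b)%N) * lam ^+ n =
  \sum_(0 <= b < M) e b * lam ^+ b * S c (M - b)%N.
Proof.
elim: M => [|M IH]; first by rewrite !big_nil.
rewrite big_nat_recr //= IH.
have E : forall b, (0 <= b < M.+1)%N -> e b * lam ^+ b * S c (M.+1 - b) =
   e b * lam ^+ b * S c (M - b)%N + e b * c (M - b)%N * lam ^+ M.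
  move=> b /andP[_ bM]; rewrite subSn // /S big_nat_recr //= mulrDr.
  have -> : lam ^+ M = lam ^+ b * lam ^+ (M - b) by rewrite -exprD subnKC // -ltnS.
  ring.
rewrite (eq_big_nat _ _ E) big_split /= big_nat_recr //= subnn /S big_nil mulr0 addr0.
by rewrite mulr_suml !big_mkord.
Qed.

Lemma T_le e c M : (forall n, 0 <= e n) -> (forall n, 0 <= c n) ->
  \sum_(0 <= b < M) e b * lam ^+ b * S c (M - b) <= S e M * S c M.
Proof.
move=> e0 c0; rewrite [S e M]/S mulr_suml; apply: ler_sum => b _.
apply: ler_wpM2l; first by apply: mulr_ge0 => //; apply: exprn_ge0.
by apply: S_mono => //; apply: leq_subr.
Qed.

Lemma T_ge e c M M' : (M + M <= M')%N -> (forall n, 0 <= e n) -> (forall n, 0 <= c n) ->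
  S e M * S c M <= \sum_(0 <= b < M') e b * lam ^+ b * S c (M' - b).
Proof.
move=> MM e0 c0; rewrite [S e M]/S mulr_suml.
rewrite (@big_cat_nat _ _ _ M 0 M') //=; last by lia.
rewrite -[X in X <= _]addr0; apply: lerD.
  apply: ler_sum_nat => b /andP[_ bM].
  apply: ler_wpM2l; first by apply: mulr_ge0 => //; apply: exprn_ge0.
  by apply: S_mono => //; lia.
apply: sumr_ge0 => b _; apply: mulr_ge0; last exact: S_ge0.
by apply: mulr_ge0 => //; apply: exprn_ge0.
Qed.

End Ana.

Import numFieldNormedType.Exports.
Local Open Scope classical_set_scope.
Lemma cvg_sum_fun (R : realType) (I : finType) (P : pred I) (f : I -> nat -> R) (l : I -> R) :
  (forall m, P m -> f m n @[n --> \oo] --> l m) ->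
  (fun n => \sum_(m | P m) f m n) @ \oo --> \sum_(m | P m) l m.
Proof.
move=> hf.
suff : forall r, (fun n => \sum_(m <- r | P m) f m n) @ \oo --> \sum_(m <- r | P m) l m.
  by apply.
elim => [|a r IH].
  under eq_fun do rewrite big_nil.
  by rewrite big_nil; apply: cvg_cst.
under eq_fun do rewrite big_cons.
rewrite big_cons.
case: (boolP (P a)) => Pa; last exact: IH.
by apply: cvgD => //; apply: hf.
Qed.

Local Open Scope ring_scope.

Lemma Rgen_S (R : realType) N (p : 'I_N -> 'I_N -> bool -> R) lam s t kk :
  Rgen p s t kk lam = limn (S lam (fun n => H p s [::] [:: (kk, t)] n)).
Proof.
rewrite /Rgen /S.
have -> : (fun M => \sum_(0 <= n < M) hitprob p s [:: (kk, t)] n * lam ^+ n) =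
  (fun M => \sum_(0 <= n < M) H p s [::] [:: (kk, t)] n * lam ^+ n) => //.
by apply/funext => M; apply: eq_bigr => n _; rewrite hitprob_H.
Qed.

Lemma S_succ (R : realType) N (p : 'I_N -> 'I_N -> bool -> R)
  (hp0 : forall a b k, a != b -> 0 <= p a b k) lam (i j : 'I_N) k M : i != j ->
  S lam (fun n => H p i [::] [:: (k, j)] n) M.+1 =
  lam * ((0 < M)%N%:R * p i j k
   + \sum_(m | (m != i) && (m != j)) p i m k * S lam (fun n => H p m [::] [:: (k, j)] n) M
   + \sum_(m | m != i) p i m (~~ k) *
       \sum_(0 <= b < M) H p m [::] [:: (~~ k, i)] b * lam ^+ b *
          S lam (fun n => H p i [::] [:: (k, j)] n) (M - b)).
Proof.
move=> ij.
rewrite {1}/S big_nat_recl // [X in X + _](_ : _ = 0) ?add0r; last by rewrite /= mul0r.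
transitivity (lam * \sum_(0 <= n < M) H p i [::] [:: (k, j)] n.+1 * lam ^+ n).
  by rewrite mulr_sumr; apply: eq_bigr => n _; rewrite exprS; ring.
congr (_ * _).
under eq_bigr do rewrite H_coef // !mulrDl.
rewrite !big_split /=.
congr (_ + _ + _).
- case: M => [|M]; first by rewrite big_nil mul0r.
  rewrite big_nat_recl //= expr0 mulr1 mul1r big1 ?addr0 // => n _.
  by rewrite !mul0r.
- under eq_bigr do rewrite mulr_suml.
  rewrite exchange_big /=; apply: eq_bigr => m _.
  rewrite /S mulr_sumr; apply: eq_bigr => n _; ring.
- under eq_bigr do rewrite mulr_suml.
  rewrite exchange_big /=; apply: eq_bigr => m _.
  rewrite -cauchy mulr_sumr; apply: eq_bigr => n _; ring.
Qed.

Unset Implicit Arguments. Set Strict Implicit.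

Theorem proposition5p3 (R : realType) (N : nat) (hN : (3 <= N)%N)
  (p : 'I_N -> 'I_N -> bool -> R)
  (hp : forall (i j : 'I_N) (k : bool), i != j -> 0 < p i j k < 1)
  (hsum : forall i : 'I_N, \sum_(j : 'I_N | j != i) \sum_(k : bool) p i j k = 1)
  (lam : R) (hlam : 0 <= lam <= 1)
  (i j : 'I_N) (hij : i != j) (k : bool) :
  Rgen p i j k lam =
  lam * (p i j k
         + \sum_(m : 'I_N | (m != i) && (m != j)) p i m k * Rgen p m j k lam
         + \sum_(m : 'I_N | m != i)
              p i m (~~ k) * Rgen p m i (~~ k) lam * Rgen p i j k lam).
Proof.
have hp0 : forall a b k, a != b -> 0 <= p a b k.
  by move=> a b k' ab; case/andP: (hp a b k' ab) => /ltW.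
case/andP: hlam => hl0 hl1.
have f0 : forall s x n, 0 <= H p s [::] x n by move=> *; apply: H_ge0.
have f1 : forall s x M, \sum_(0 <= n < M) H p s [::] x n <= 1.
  by move=> *; apply: H_sum_le1.
have hS0 : forall s x M, 0 <= S lam (fun n => H p s [::] x n) M.
  by move=> s x M; apply: S_ge0.
have hSle : forall s x M, S lam (fun n => H p s [::] x n) M <= limn (S lam (fun n => H p s [::] x n)).
  by move=> s x M; apply: S_le_lim.
have hcv : forall s x, cvgn (S lam (fun n => H p s [::] x n)).
  by move=> s x; apply: S_cvg.
have hmono : forall s x, {homo S lam (fun n => H p s [::] x n) : a b / (a <= b)%N >-> a <= b}.
  by move=> s x; apply: S_mono.
have hL0 : forall s x, 0 <= limn (S lam (fun n => H p s [::] x n)).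
  by move=> s x; apply: lim_ge0.
rewrite !Rgen_S.
under eq_bigr do rewrite Rgen_S.
under [X in _ + X]eq_bigr do rewrite !Rgen_S.
apply/le_anti/andP; split.
  apply: limr_le; first exact: hcv.
  apply: nearW => M.
  apply: le_trans (hmono _ _ _ _ (leqnSn M)) _.
  rewrite S_succ //; apply: ler_wpM2l => //.
  apply: lerD; first apply: lerD.
  - by case: M => [|M]; rewrite ?mul0r ?mul1r //; apply: hp0.
  - apply: ler_sum => m /andP[mi mj].
    by apply: ler_wpM2l; [apply: hp0; rewrite eq_sym | apply: hSle].
  - apply: ler_sum => m mi; rewrite -mulrA.
    apply: ler_wpM2l; first by apply: hp0; rewrite eq_sym.
    apply: le_trans; first by apply: T_le => *; rewrite ?hl0 ?f0.
    by apply: ler_pM => //; apply: hSle.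
pose F M := lam * (p i j k
   + \sum_(m | (m != i) && (m != j)) p i m k * S lam (fun n => H p m [::] [:: (k, j)] n) M
   + \sum_(m | m != i) p i m (~~ k) * S lam (fun n => H p m [::] [:: (~~ k, i)] n) M
        * S lam (fun n => H p i [::] [:: (k, j)] n) M).
apply: (cvgr_to_le (f := F) (F := \oo)).
  rewrite /F; apply: cvgMr; apply: cvgD; first apply: cvgD.
  - exact: cvg_cst.
  - by apply: cvg_sum_fun => m _; apply: cvgMr; apply: hcv.
  - apply: cvg_sum_fun => m _; apply: cvgM; last exact: hcv.
    by apply: cvgMr; apply: hcv.
apply: nearW => M.
apply: le_trans (hSle _ _ (M + M).+2).
rewrite /F S_succ //; apply: ler_wpM2l => //.
apply: lerD; first apply: lerD.
- by rewrite mul1r.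
- apply: ler_sum => m /andP[mi mj].
  apply: ler_wpM2l; first by apply: hp0; rewrite eq_sym.
  by apply: hmono; lia.
- apply: ler_sum => m mi; rewrite -mulrA.
  apply: ler_wpM2l; first by apply: hp0; rewrite eq_sym.
  by apply: T_ge => *; rewrite ?hl0 ?f0.
Qed.
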